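(* Let $G=(V,E)$ be a connected undirected unweighted graph in which every node has a self-loop, and let $k\le|V|$ be a positive integer. Let $S^*\in\arg\max_{S\subseteq V,|S|=k}\operatorname{fp}^{\infty}(G^S)$. Let $S'=S'_k$, where $S'_0=\emptyset$ and, for $i=1,\dots,k$, $S'_i=S'_{i-1}\cup\{v_i\}$ with $v_i\in\arg\max_{v\in V\setminus S'_{i-1}}\operatorname{fp}^{\infty}(G^{S'_{i-1}\cup\{v\}})$. Then $\operatorname{fp}^{\infty}(G^{S'})\ge\left(1-\frac1e\right)\operatorname{fp}^{\infty}(G^{S^*})$.
   Context: Positional Voter model. A graph $G=(V,E,w)$ has node set $V$ with $|V|=n$, edge set $E\subseteq V\times V$ and weights $w\colon E\to\mathbb{R}_{>0}$; $\operatorname{in}(u)=\{v\in V:(v,u)\in E\}$. ''Undirected unweighted'' means $E$ is symmetric and $w\equiv 1$; ''self-loop at $u$'' means $(u,u)\in E$. A configuration is a set $X\subseteq V$ (the nodes carrying the novel trait $A$). Given a biased set $S\subseteq V$ and bias $\delta\ge 0$, define $f^S_X(v\mid u)=1+\delta$ if $v\in X$ and $u\in S$, and $1$ otherwise. The process $(\mathcal{X}_t)_{t\ge0}$: given $\mathcal{X}_t=X$, a node $u$ is chosen uniformly at random from $V$, then $v\in\operatorname{in}(u)$ is chosen with probability $\frac{f^S_X(v\mid u)\,w(v,u)}{\sum_{x\in\operatorname{in}(u)} f^S_X(x\mid u)\,w(x,u)}$, and $\mathcal{X}_{t+1}=X\cup\{u\}$ if $v\in X$, $\mathcal{X}_{t+1}=X\setminus\{u\}$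 otherwise. Define $\operatorname{fp}(G^S,\delta,X)=\mathbb{P}[\exists t\ge0:\mathcal{X}_t=V\mid\mathcal{X}_0=X]$, $\operatorname{fp}(G^S,\delta)=\frac1n\sum_{u\in V}\operatorname{fp}(G^S,\delta,\{u\})$, and $\operatorname{fp}^{\infty}(G^S)=\lim_{\delta\to\infty}\operatorname{fp}(G^S,\delta)$. *)

(* Defs.v *)
From HB Require Import structures.
From mathcomp Require Import all_boot all_order all_algebra.
From mathcomp Require Import all_classical all_reals all_analysis.
Set Implicit Arguments. Unset Strict Implicit. Unset Printing Implicit Defensive.
Import Order.TTheory GRing.Theory Num.Theory.
Import numFieldNormedType.Exports.
Local Open Scope classical_set_scope.
Local Open Scope ring_scope.

(* Graph: node set T (a finType, V = [set: T], n = #|T|), edge relation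
   e : rel T with (v,u) \in E iff e v u; unweighted (w == 1).
   in(u) = [set v | e v u].  Configurations are X : {set T}. *)

Definition fbias (R : realType) (T : finType) (S : {set T}) (delta : R)
  (X : {set T}) (v u : T) : R :=
  if (v \in X) && (u \in S) then 1 + delta else 1.

(* one step of the Positional Voter chain, as an expectation operator:
   step h X = E[ h(X_{t+1}) | X_t = X ]  *)
Definition pv_step (R : realType) (T : finType) (e : rel T) (S : {set T})
  (delta : R) (h : {set T} -> R) (X : {set T}) : R :=
  (#|T|%:R)^-1 * \sum_(u : T) \sum_(v : T | e v u)
     (fbias S delta X v u / \sum_(x : T | e x u) fbias S delta X x u)
       * h (if v \in X then u |: X else X :\ u).

(* hit_by t X = P[ exists s <= t, X_s = V | X_0 = X ] *)
Fixpoint hit_by (R : realType) (T : finType) (e : rel T) (S : {set T})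
  (delta : R) (t : nat) (X : {set T}) : R :=
  if X == [set: T]%SET then 1 else
  match t with
  | 0 => 0
  | t'.+1 => pv_step e S delta (hit_by e S delta t') X
  end.

(* fp(G^S, delta, X) = P[ exists t, X_t = V | X_0 = X ]
   = lim_{t -> oo} P[ exists s <= t, X_s = V ]  (continuity of measure) *)
Definition fp_from (R : realType) (T : finType) (e : rel T) (S : {set T})
  (delta : R) (X : {set T}) : R :=
  lim (hit_by e S delta t X @[t --> \oo]).

Definition fp (R : realType) (T : finType) (e : rel T) (S : {set T})
  (delta : R) : R :=
  (#|T|%:R)^-1 * \sum_(u : T) fp_from e S delta [set u].

Definition fp_inf (R : realType) (T : finType) (e : rel T) (S : {set T}) : R :=
  lim (fp e S delta @[delta --> +oo]).

(* Main.v *)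
Require Import Defs.
From HB Require Import structures.
From mathcomp Require Import all_boot all_order all_algebra.
From mathcomp Require Import all_classical all_reals all_analysis.
From mathcomp Require Import ring lra.
Import Order.TTheory GRing.Theory Num.Theory.

Module M1.
Set Implicit Arguments. Unset Strict Implicit. Unset Printing Implicit Defensive.
Import Order.TTheory GRing.Theory Num.Theory.
Import numFieldNormedType.Exports.
Local Open Scope classical_set_scope.
Local Open Scope ring_scope.

Section Chain.
Variables (R : realType) (T : finType) (e : rel T).
Hypothesis e_sym : symmetric e.
Hypothesis e_loop : forall u : T, e u u.
Hypothesis e_conn : forall x y : T, connect e x y.
Hypothesis Hn : (0 < #|T|)%N.

Local Notation nR := (#|T|%:R : R).
Local Notation fT := [set: T]%SET.
Local Notation f0 := (@finset.set0 T).

Lemma nR_gt0 : 0 < nR. Proof. by rewrite ltr0n. Qed.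
Lemma nR_neq0 : nR != 0. Proof. by rewrite pnatr_eq0 -lt0n. Qed.

Definition succ (X : {set T}) (u v : T) := if v \in X then u |: X else X :\ u.

Definition stp (c : {set T} -> T -> T -> R) (h : {set T} -> R) (X : {set T}) : R :=
  nR^-1 * \sum_(u : T) \sum_(v : T | e v u) c X u v * h (succ X u v).

Fixpoint Hg c (t : nat) (X : {set T}) : R :=
  if X == fT then 1 else if t is t'.+1 then stp c (Hg c t') X else 0.

Fixpoint Ng c (t : nat) (X : {set T}) : R :=
  if (X == fT) || (X == f0) then 0 else if t is t'.+1 then stp c (Ng c t') X else 1.

Definition Hinf c (X : {set T}) : R := lim (Hg c t X @[t --> \oo]).

Lemma set0_neqT : (f0 == fT) = false.
Proof.
apply/negbTE; move/card_gt0P: Hn => [x _].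
apply/eqP => /setP /(_ x). rewrite !inE. by [].
Qed.

Lemma crossing (X : {set T}) : X != f0 -> X != fT ->
  exists u v, [/\ u \notin X, v \in X & e v u].
Proof.
move=> /set0Pn [x xX] XT.
have [y yX] : exists y, y \notin X.
  apply/existsP; apply: contraR XT => /existsPn H; apply/eqP/setP => z.
  by rewrite finset.in_setT; move: (H z); rewrite negbK.
apply/not_existsP => H.
have cl : closed_mem e (mem X).
  apply: (intro_closed (sym_connect_sym e_sym)) => a b eab aX; apply/negPn/negP => bX.
  by apply: (H b); exists a; split.
move: (closed_connect cl (e_conn x y)); rewrite xX.
by move=> /esym; rewrite (negbTE yX).
Qed.

Section Gen.
Variable c : {set T} -> T -> T -> R.
Hypothesis c0 : forall X u v, 0 <= c X u v.
Hypothesis c1 : forall X u, \sum_(v : T | e v u) c X u v = 1.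
Hypothesis c2 : forall (X : {set T}) u v, e v u -> v \in X -> nR^-1 <= c X u v.

Lemma stp_le h1 h2 X : (forall Y, h1 Y <= h2 Y) -> stp c h1 X <= stp c h2 X.
Proof.
move=> H; rewrite /stp ler_wpM2l ?invr_ge0 ?ler0n //.
apply: ler_sum => u _; apply: ler_sum => v _; apply: ler_wpM2l => //.
Qed.

Lemma stp_add h1 h2 X :
  stp c (fun Y => h1 Y + h2 Y) X = stp c h1 X + stp c h2 X.
Proof.
rewrite /stp -mulrDr -big_split; congr (_ * _); apply: eq_bigr => u _.
by rewrite -big_split; apply: eq_bigr => v _; rewrite mulrDr.
Qed.

Lemma stp_scale a h X : stp c (fun Y => a * h Y) X = a * stp c h X.
Proof.
rewrite /stp [RHS]mulrCA; congr (_ * _); rewrite [RHS]mulr_sumr; apply: eq_bigr => u _.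
by rewrite [RHS]mulr_sumr; apply: eq_bigr => v _; rewrite mulrCA.
Qed.

Lemma stp_cst a X : stp c (fun _ => a) X = a.
Proof.
rewrite /stp (eq_bigr (fun _ => a)); last first.
  by move=> u _; rewrite -mulr_suml c1 mul1r.
by rewrite sumr_const (_ : #|xpredT| = #|T|) // -[a *+ _]mulr_natl mulrA mulVf ?mul1r // nR_neq0.
Qed.

Lemma stp_ge0 h X : (forall Y, 0 <= h Y) -> 0 <= stp c h X.
Proof. by move=> H; rewrite -(stp_cst 0 X); apply: stp_le. Qed.

Lemma stp_le1 h X : (forall Y, h Y <= 1) -> stp c h X <= 1.
Proof. by move=> H; rewrite -(stp_cst 1 X); apply: stp_le. Qed.

Lemma stp_norm h X B : (forall Y, `|h Y| <= B) -> `|stp c h X| <= B.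
Proof.
move=> H; rewrite ler_norml; apply/andP; split.
  by rewrite -(stp_cst (- B) X); apply: stp_le => Y; move: (H Y); rewrite ler_norml => /andP[].
by rewrite -[X in _ <= X](stp_cst B X); apply: stp_le => Y; move: (H Y); rewrite ler_norml => /andP[].
Qed.

Lemma stp_ext h1 h2 X :
  (forall u v, e v u -> c X u v != 0 -> h1 (succ X u v) = h2 (succ X u v)) ->
  stp c h1 X = stp c h2 X.
Proof.
move=> H; rewrite /stp; congr (_ * _); apply: eq_bigr => u _.
apply: eq_bigr => v evu; have [->|nz] := eqVneq (c X u v) 0; first by rewrite !mul0r.
by rewrite H.
Qed.

Lemma stp_set0 h : stp c h f0 = h f0.
Proof.
rewrite -[RHS](stp_cst (h f0) f0); apply: stp_ext => u v _ _.
by rewrite /succ finset.in_set0 finset.set0D.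
Qed.

Lemma stp_term h X u v : (forall Y, 0 <= h Y) -> e v u ->
  nR^-1 * (c X u v * h (succ X u v)) <= stp c h X.
Proof.
move=> H evu; rewrite /stp ler_wpM2l ?invr_ge0 ?ler0n //.
apply: le_trans (_ : _ <= \sum_(v0 | e v0 u) c X u v0 * h (succ X u v0)) _.
  rewrite (bigD1 v) //= lerDl; apply: sumr_ge0 => w _; exact: mulr_ge0.
rewrite [X in _ <= X](bigD1 u) //= lerDl; apply: sumr_ge0 => w _; apply: sumr_ge0 => y _.
exact: mulr_ge0.
Qed.

Lemma Hg_bnd t X : 0 <= Hg c t X <= 1.
Proof.
elim: t X => [|t IH] X /=; case: ifP => _ //; rewrite ?lexx ?ler01 //.
apply/andP; split; [apply: stp_ge0 | apply: stp_le1] => Y; by case/andP: (IH Y).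
Qed.

Lemma Ng_bnd t X : 0 <= Ng c t X <= 1.
Proof.
elim: t X => [|t IH] X /=; case: ifP => _ //; rewrite ?lexx ?ler01 //.
apply/andP; split; [apply: stp_ge0 | apply: stp_le1] => Y; by case/andP: (IH Y).
Qed.

Lemma Hg_ge0 t X : 0 <= Hg c t X. Proof. by case/andP: (Hg_bnd t X). Qed.
Lemma Hg_le1 t X : Hg c t X <= 1. Proof. by case/andP: (Hg_bnd t X). Qed.
Lemma Ng_ge0 t X : 0 <= Ng c t X. Proof. by case/andP: (Ng_bnd t X). Qed.
Lemma Ng_le1 t X : Ng c t X <= 1. Proof. by case/andP: (Ng_bnd t X). Qed.

Lemma Hg_T t : Hg c t fT = 1.
Proof. by case: t => [|t] /=; rewrite eqxx. Qed.

Lemma Ng_T t : Ng c t fT = 0.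
Proof. by case: t => [|t] /=; rewrite eqxx. Qed.

Lemma Ng_set0 t : Ng c t f0 = 0.
Proof. by case: t => [|t] /=; rewrite eqxx orbT. Qed.

Lemma Hg_set0 t : Hg c t f0 = 0.
Proof. by elim: t => [|t IH] /=; rewrite set0_neqT // stp_set0. Qed.

Lemma Hg_mono1 t X : Hg c t X <= Hg c t.+1 X.
Proof.
elim: t X => [|t IH] X /=; case: ifP => _ //.
  by apply: stp_ge0 => Y; exact: (Hg_ge0 0 Y).
by apply: stp_le.
Qed.

Lemma Hg_mono t s X : Hg c t X <= Hg c (t + s) X.
Proof.
elim: s => [|s IH]; first by rewrite addn0.
by apply: le_trans IH _; rewrite addnS; apply: Hg_mono1.
Qed.

Lemma H_gap t s X : Hg c (t + s) X - Hg c t X <= Ng c t X.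
Proof.
elim: t X => [|t IH] X;
  (have [->|XT] := eqVneq X fT; first by rewrite !Hg_T subrr Ng_T);
  (have [->|X0] := eqVneq X f0; first by rewrite !Hg_set0 subrr Ng_set0).
  by rewrite add0n /= (negbTE XT) (negbTE X0) subr0 Hg_le1.
rewrite addSn /= (negbTE XT) (negbTE X0) /=.
rewrite lerBlDl -stp_add; apply: stp_le => Y; rewrite -lerBlDl; exact: IH.
Qed.

Lemma HN_le1 t X : Hg c t X + Ng c t X <= 1.
Proof.
elim: t X => [|t IH] X;
  (have [->|XT] := eqVneq X fT; first by rewrite Hg_T Ng_T addr0);
  (have [->|X0] := eqVneq X f0; first by rewrite Hg_set0 Ng_set0 addr0 ler01).
  by rewrite /= (negbTE XT) (negbTE X0) add0r.
by rewrite /= (negbTE XT) (negbTE X0) /= -stp_add; apply: stp_le1.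
Qed.

Local Notation gam := (nR^-1 * nR^-1).

Lemma gam_gt0 : 0 < gam. Proof. by rewrite mulr_gt0 // invr_gt0 nR_gt0. Qed.
Lemma gam_le1 : gam <= 1.
Proof.
have h : nR^-1 <= 1 by rewrite invf_le1 ?nR_gt0 // ler1n.
by apply: mulr_ile1; rewrite ?invr_ge0 ?ler0n.
Qed.

Lemma Hg_low k X : X != f0 -> (#|~: X| <= k)%N -> gam ^+ k <= Hg c k X.
Proof.
elim: k X => [|k IH] X X0 Xk.
  have -> : X = fT.
    by apply/setP => x; rewrite finset.in_setT; apply/negPn/negP => xX; move: Xk; rewrite leqn0 cards_eq0 => /eqP/setP/(_ x); rewrite !inE xX.
  by rewrite /= eqxx.
have g0 : 0 <= gam by exact: ltW gam_gt0.
rewrite /=; case: ifP => [_|/negbT XT]; first by apply: exprn_ile1 => //; exact: gam_le1.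
have [u [v [uX vX evu]]] := crossing X0 XT.
apply: le_trans (@stp_term (Hg c k) X u v (fun Y => Hg_ge0 k Y) evu).
rewrite /succ vX exprS -mulrA; apply: ler_wpM2l; first by rewrite invr_ge0 ler0n.
apply: ler_pM.
- by rewrite invr_ge0 ler0n.
- exact: exprn_ge0.
- exact: c2.
apply: IH; first by apply/set0Pn; exists u; rewrite finset.setU11.
have uC : u \in ~: X by rewrite inE.
move: Xk; rewrite (cardsD1 u (~: X)) uC add1n ltnS; apply: leq_trans.
apply: subset_leq_card; apply/fintype.subsetP => x; rewrite !inE negb_or => /andP[-> ->] //.
Qed.

Local Notation mm := #|T|.
Local Notation bet := (1 - gam ^+ mm).

Lemma bet_ge0 : 0 <= bet.
Proof. by rewrite subr_ge0; apply: exprn_ile1; [exact: ltW gam_gt0|exact: gam_le1]. Qed.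
Lemma bet_lt1 : bet < 1.
Proof. by rewrite ltrBlDr ltrDl exprn_gt0 // gam_gt0. Qed.

Lemma Ng_m X : Ng c mm X <= bet * Ng c 0 X.
Proof.
have := HN_le1 mm X; rewrite /=; case: ifP => XA.
  by case: mm => [|?] /=; rewrite XA mulr0.
rewrite mulr1 => H; rewrite lerBrDr; apply: le_trans H; rewrite addrC lerD2r.
apply: Hg_low; first by apply: contraFN XA => ->; rewrite orbT.
exact: max_card.
Qed.

Lemma Ng_shift a X : Ng c (a + mm) X <= bet * Ng c a X.
Proof.
elim: a X => [|a IH] X; first exact: Ng_m.
rewrite addSn /=; case: ifP => _; first by rewrite mulr0.
rewrite -stp_scale; exact: stp_le.
Qed.

Lemma Ng_pow j X : Ng c (j * mm) X <= bet ^+ j.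
Proof.
elim: j X => [|j IH] X; first by rewrite mul0n expr0 Ng_le1.
rewrite mulSn addnC exprS; apply: le_trans (Ng_shift _ X) _.
by rewrite ler_wpM2l ?bet_ge0.
Qed.

Lemma Ng_anti1 t X : Ng c t.+1 X <= Ng c t X.
Proof.
elim: t X => [|t IH] X /=; case: ifP => _ //; first exact: stp_le1 (fun Y => Ng_le1 0 Y).
exact: stp_le.
Qed.

Lemma Ng_anti t s X : Ng c (t + s) X <= Ng c t X.
Proof.
elim: s => [|s IH]; first by rewrite addn0.
by rewrite addnS; apply: le_trans IH; apply: Ng_anti1.
Qed.

Lemma Hg_cvg X : cvgn (fun t => Hg c t X).
Proof.
apply/cvg_ex; eexists; apply: nondecreasing_cvgn.
  by move=> a b ab; rewrite -(subnKC ab) Hg_mono.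
by exists 1 => _ [t _ <-]; apply: Hg_le1.
Qed.

Lemma Hinf_ge t X : Hg c t X <= Hinf c X.
Proof.
apply: (nondecreasing_cvgn_le (u_ := fun t => Hg c t X)); last exact: Hg_cvg.
by move=> a b ab; rewrite -(subnKC ab) Hg_mono.
Qed.

Lemma Hinf_le t X : Hinf c X <= Hg c t X + Ng c t X.
Proof.
apply: limr_le; first exact: Hg_cvg.
apply: nearW => s; case: (leqP s t) => st.
  apply: le_trans (Hg_mono s (t - s) X) _; by rewrite subnKC // lerDl Ng_ge0.
rewrite -(subnKC (ltnW st)) -lerBlDl; exact: H_gap.
Qed.

End Gen.
End Chain.

End M1.
Import M1.

Module M2.
Set Implicit Arguments. Unset Strict Implicit. Unset Printing Implicit Defensive.
Import Order.TTheory GRing.Theory Num.Theory.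
Import numFieldNormedType.Exports.
Local Open Scope classical_set_scope.
Local Open Scope ring_scope.

Lemma L1 (R : realFieldType) (a b d n : R) : 1 <= a -> 0 <= b -> b <= n -> 1 <= d ->
  `|d / (d * a + b) - a^-1| <= n / d.
Proof.
move=> a1 b0 bn d1.
have a0 : 0 < a by lra.
have d0 : 0 < d by lra.
have D0 : 0 < d * a + b by nra.
have -> : d / (d * a + b) - a^-1 = - (b / (a * (d * a + b))).
  by field; apply/andP; split; rewrite gt_eqF.
rewrite normrN ger0_norm; last by rewrite divr_ge0 // mulr_ge0 // ltW.
rewrite ler_pdivrMr; last by apply: mulr_gt0.
rewrite mulrAC ler_pdivlMr //.
have h1 : d <= d * a + b by nra.
have h2 : d <= a * (d * a + b) by nra.
have h3 : 0 <= n - b by lra.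
have h4 : 0 <= n * (a * (d * a + b) - d) by apply: mulr_ge0; lra.
have h5 : 0 <= (n - b) * d by apply: mulr_ge0; lra.
nra.
Qed.

Lemma L2 (R : realFieldType) (a b d n : R) : 1 <= a -> 0 <= b -> 1 <= n -> 1 <= d ->
  `|(d * a + b)^-1 - 0| <= n / d.
Proof.
move=> a1 b0 n1 d1.
have d0 : 0 < d by lra.
have D0 : 0 < d * a + b by nra.
rewrite subr0 ger0_norm; last by rewrite invr_ge0 ltW.
rewrite -div1r ler_pdivrMr // mulrAC ler_pdivlMr //.
nra.
Qed.

Lemma inv_le (R : realFieldType) (a b : R) : 0 < a -> a <= b -> b^-1 <= a^-1.
Proof. by move=> a0 ab; rewrite lef_pV2 ?posrE // (lt_le_trans a0 ab). Qed.

Lemma pow_small (R : realType) (x eps : R) : 0 <= x -> x < 1 -> 0 < eps ->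
  exists j : nat, x ^+ j <= eps.
Proof.
move=> x0 x1 ep.
have : `|x| < 1 by rewrite ger0_norm.
move=> /cvg_expr /cvgrPdist_le /(_ eps ep) [N _ HN].
exists N; have := HN N (leqnn N); rewrite /= sub0r normrN ger0_norm //.
exact: exprn_ge0.
Qed.

Section Spec.
Variables (R : realType) (T : finType) (e : rel T).
Hypothesis e_sym : symmetric e.
Hypothesis e_loop : forall u : T, e u u.
Hypothesis e_conn : forall x y : T, connect e x y.
Hypothesis Hn : (0 < #|T|)%N.
Variable S : {set T}.

Local Notation nR := (#|T|%:R : R).
Local Notation fT := [set: T]%SET.
Local Notation f0 := (@finset.set0 T).

Definition cnt (P : pred T) : R := \sum_(x | P x) 1.

Lemma cnt_ge0 P : 0 <= cnt P.
Proof. by apply: sumr_ge0 => *; rewrite ler01. Qed.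

Lemma cnt_le P : cnt P <= nR.
Proof.
rewrite /cnt big_mkcond /=; apply: le_trans (_ : _ <= \sum_(x : T) 1) _.
  by apply: ler_sum => x _; case: ifP => _; rewrite ?ler01 ?lexx.
by rewrite sumr_const.
Qed.

Lemma cnt_ge1 (P : pred T) x : P x -> 1 <= cnt P.
Proof.
move=> Px; rewrite /cnt (bigD1 x) //= lerDl; apply: sumr_ge0 => *; exact: ler01.
Qed.

Lemma sum_cst (P : pred T) (a : R) : \sum_(x | P x) a = a * cnt P.
Proof. by rewrite /cnt mulr_sumr; apply: eq_bigr => *; rewrite mulr1. Qed.

Definition cd (delta : R) (X : {set T}) (u v : T) : R :=
  fbias S delta X v u / \sum_(x : T | e x u) fbias S delta X x u.

Definition ci (X : {set T}) (u v : T) : R :=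
  if (u \in S) && [exists x, e x u && (x \in X)] then
    (if v \in X then (cnt (fun x => e x u && (x \in X)))^-1 else 0)
  else (cnt (fun x => e x u))^-1.

Lemma hit_byE delta t : hit_by e S delta t = Hg e (cd delta) t.
Proof.
elim: t => [|t IH]; apply: funext => X //=.
by rewrite IH.
Qed.

Lemma fp_fromE delta X : fp_from e S delta X = Hinf e (cd delta) X.
Proof.
rewrite /fp_from /Hinf.
have -> : (fun t : nat => hit_by e S delta t X) = (fun t => Hg e (cd delta) t X).
  by apply: funext => t; rewrite hit_byE.
by [].
Qed.

Lemma fsum_notS delta (X : {set T}) u : u \notin S ->
  \sum_(x : T | e x u) fbias S delta X x u = cnt (fun x => e x u).
Proof. by move=> uS; apply: eq_bigr => x _; rewrite /fbias (negbTE uS) andbF. Qed.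

Lemma fsum_noA delta (X : {set T}) u : ~~ [exists x, e x u && (x \in X)] ->
  \sum_(x : T | e x u) fbias S delta X x u = cnt (fun x => e x u).
Proof.
move=> /existsPn H; apply: eq_bigr => x exu; rewrite /fbias.
by case: ifP => // /andP [xX _]; move: (H x); rewrite exu xX.
Qed.

Lemma fsum_S delta (X : {set T}) u : u \in S ->
  \sum_(x : T | e x u) fbias S delta X x u =
  (1 + delta) * cnt (fun x => e x u && (x \in X)) + cnt (fun x => e x u && (x \notin X)).
Proof.
move=> uS; rewrite (bigID (fun x => x \in X)) /=; congr (_ + _).
  by rewrite -sum_cst; apply: eq_bigr => x /andP[_ xX]; rewrite /fbias xX uS.
by rewrite -[X in _ = X]mul1r -sum_cst; apply: eq_bigr => x /andP[_ /negbTE xX]; rewrite /fbias xX.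
Qed.

Lemma fbias_gt0 (delta : R) (X : {set T}) x u : 0 <= delta -> 0 < fbias S delta X x u.
Proof. by move=> d0; rewrite /fbias; case: ifP => _; lra. Qed.

Lemma fsum_gt0 (delta : R) (X : {set T}) u : 0 <= delta -> 0 < \sum_(x : T | e x u) fbias S delta X x u.
Proof.
move=> d0; rewrite (bigD1 u) //=; apply: lt_le_trans (fbias_gt0 X u u d0) _.
rewrite lerDl; apply: sumr_ge0 => x _; exact: ltW (fbias_gt0 _ _ _ d0).
Qed.

Lemma cd_ge0 delta : 0 <= delta -> forall X u v, 0 <= cd delta X u v.
Proof. by move=> d0 X u v; rewrite /cd divr_ge0 // ltW // ?fbias_gt0 ?fsum_gt0. Qed.

Lemma cd_sum delta : 0 <= delta -> forall X u, \sum_(v | e v u) cd delta X u v = 1.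
Proof. by move=> d0 X u; rewrite /cd -mulr_suml divff // gt_eqF // fsum_gt0. Qed.

Lemma cd_low delta : 0 <= delta ->
  forall (X : {set T}) u v, e v u -> v \in X -> nR^-1 <= cd delta X u v.
Proof.
move=> d0 X u v evu vX; rewrite /cd ler_pdivlMr ?fsum_gt0 // ler_pdivrMl ?nR_gt0 //.
rewrite big_mkcond /=; apply: le_trans (_ : _ <= \sum_(x : T) fbias S delta X v u) _.
  apply: ler_sum => x _; case: ifP => _; last exact: ltW (fbias_gt0 _ _ _ d0).
  rewrite /fbias vX /=; case: (u \in S); rewrite ?andbT ?andbF; last by [].
  by case: (x \in X) => //; lra.
by rewrite sumr_const mulrC mulr_natr.
Qed.

Lemma ci_ge0 (X : {set T}) u v : 0 <= ci X u v.
Proof. by rewrite /ci; case: ifP => _; [case: ifP => _|]; rewrite ?invr_ge0 ?cnt_ge0. Qed.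

Lemma ci_sum (X : {set T}) u : \sum_(v | e v u) ci X u v = 1.
Proof.
rewrite /ci; case: (boolP ((u \in S) && [exists x, e x u && (x \in X)])) => [/andP [uS /existsP [x /andP [exu xX]]]|_].
  rewrite -big_mkcondr /= sum_cst mulVf // gt_eqF //.
  by apply: lt_le_trans ltr01 (cnt_ge1 (x := x) _); rewrite /= exu.
rewrite sum_cst mulVf // gt_eqF //.
by apply: lt_le_trans ltr01 (cnt_ge1 (x := u) _).
Qed.

Lemma ci_low (X : {set T}) u v : e v u -> v \in X -> nR^-1 <= ci X u v.
Proof.
move=> evu vX; rewrite /ci; case: ifP => _; first rewrite vX.
  apply: inv_le; last exact: cnt_le.
  by apply: lt_le_trans ltr01 (cnt_ge1 (x := v) _); rewrite /= evu.
apply: inv_le; last exact: cnt_le.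
by apply: lt_le_trans ltr01 (cnt_ge1 (x := u) _).
Qed.

Lemma cd_ci delta (X : {set T}) u v : 0 <= delta -> e v u ->
  `|cd delta X u v - ci X u v| <= nR / (1 + delta).
Proof.
move=> d0 evu.
have n1 : 1 <= nR by rewrite ler1n.
have dg : 0 < 1 + delta by lra.
have triv : forall P, `|1 / cnt P - (cnt P)^-1| <= nR / (1 + delta).
  by move=> P; rewrite div1r subrr normr0 divr_ge0 // ?ler0n ltW.
rewrite /ci /cd; case: (boolP (u \in S)) => uS /=; last first.
  by rewrite fsum_notS // /fbias (negbTE uS) andbF.
case: (boolP [exists x, e x u && (x \in X)]) => ex; last first.
  rewrite fsum_noA // /fbias; move/existsPn: ex => /(_ v); rewrite evu /= => /negbTE ->.
  exact: triv.
rewrite fsum_S // /fbias uS andbT.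
have a1 : 1 <= cnt (fun x => e x u && (x \in X)).
  by move/existsP: ex => [x H]; exact: (cnt_ge1 (x := x)).
case: (boolP (v \in X)) => vX.
  apply: L1 => //; [exact: cnt_ge0 | exact: cnt_le | lra].
rewrite div1r; apply: L2 => //; [exact: cnt_ge0 | lra].
Qed.

Local Notation K delta := (nR * (nR / (1 + delta))).

Lemma stp_diff delta h X : 0 <= delta -> (forall Y, `|h Y| <= 1) ->
  `|stp e (cd delta) h X - stp e ci h X| <= K delta.
Proof.
move=> d0 hb; rewrite /stp -mulrBr -sumrB normrM.
rewrite ger0_norm ?invr_ge0 ?ler0n // ler_pdivrMl ?nR_gt0 //.
apply: le_trans (ler_norm_sum _ _ _) _.
apply: le_trans (_ : _ <= \sum_(u : T) K delta) _; last by rewrite sumr_const -[_ *+ #|xpredT|]mulr_natl; exact: le_refl.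
apply: ler_sum => u _; rewrite -sumrB.
apply: le_trans (ler_norm_sum _ _ _) _.
apply: le_trans (_ : _ <= \sum_(v | e v u) nR / (1 + delta)) _.
  apply: ler_sum => v evu; rewrite -mulrBl normrM.
  rewrite -[X in _ <= X]mulr1; apply: ler_pM; [exact: normr_ge0 | exact: normr_ge0 | exact: cd_ci | exact: hb].
rewrite sum_cst mulrC ler_pM2r ?cnt_le //.
by apply: divr_gt0; [rewrite nR_gt0 | lra].
Qed.

Lemma Hg_diff delta t X : 0 <= delta ->
  `|Hg e (cd delta) t X - Hg e ci t X| <= t%:R * K delta.
Proof.
move=> d0; elim: t X => [|t IH] X /=.
  by rewrite subrr normr0 mul0r.
case: ifP => _; first by rewrite subrr normr0 mulr_ge0 // ?ler0n // mulr_ge0 ?ler0n // divr_ge0 ?ler0n //; lra.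
have -> : stp e (cd delta) (Hg e (cd delta) t) X - stp e ci (Hg e ci t) X =
  stp e (cd delta) (fun Y => Hg e (cd delta) t Y + (-1) * Hg e ci t Y) X +
  (stp e (cd delta) (Hg e ci t) X - stp e ci (Hg e ci t) X).
  rewrite stp_add ?cd_sum ?cd_ge0 // stp_scale ?cd_sum ?cd_ge0 //.
  ring.
apply: le_trans (ler_normD _ _) _; rewrite mulrSr mulrDl mul1r.
apply: lerD; last first.
  apply: stp_diff => // Y; rewrite ger0_norm ?Hg_le1 ?Hg_ge0 //;
    first [exact: ci_ge0 | exact: ci_sum].
apply: stp_norm => //; [exact: cd_ge0 | exact: cd_sum | ].
by move=> Y; rewrite mulN1r; exact: IH.
Qed.

End Spec.

End M2.
Import M2.

Module M3.
Set Implicit Arguments. Unset Strict Implicit. Unset Printing Implicit Defensive.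
Import Order.TTheory GRing.Theory Num.Theory.
Import numFieldNormedType.Exports.
Local Open Scope classical_set_scope.
Local Open Scope ring_scope.

Section Conv.
Variables (R : realType) (T : finType) (e : rel T).
Hypothesis e_sym : symmetric e.
Hypothesis e_loop : forall u : T, e u u.
Hypothesis e_conn : forall x y : T, connect e x y.
Hypothesis Hn : (0 < #|T|)%N.

Local Notation nR := (#|T|%:R : R).
Local Notation gam := ((#|T|%:R : R)^-1 * (#|T|%:R : R)^-1).
Local Notation bet := (1 - gam ^+ #|T|).

Lemma Hinf_close (c : {set T} -> T -> T -> R)
  (c0 : forall X u v, 0 <= c X u v)
  (c1 : forall X u, \sum_(v : T | e v u) c X u v = 1)
  (c2 : forall (X : {set T}) u v, e v u -> v \in X -> nR^-1 <= c X u v)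
  j X : `|Hinf e c X - Hg e c (j * #|T|) X| <= bet ^+ j.
Proof.
have h1 := Hinf_ge Hn c0 c1 (j * #|T|) X.
have h2 := Hinf_le Hn c0 c1 (j * #|T|) X.
have h3 := Ng_pow e_sym e_conn Hn c0 c1 c2 j X.
rewrite ger0_norm ?subr_ge0 //; lra.
Qed.

Lemma Hinf_ci_cd (S : {set T}) (eps delta : R) j X :
  0 <= delta -> bet ^+ j <= eps / 4 ->
  (j * #|T|)%:R * (nR * (nR / (1 + delta))) <= eps / 2 ->
  `|Hinf e (@ci R T e S) X - Hinf e (cd e S delta) X| <= eps.
Proof.
move=> d0 hj hd.
have a1 := Hinf_close (@ci_ge0 R T e S) (@ci_sum R T e e_loop S) (@ci_low R T e e_loop S) j X.
have a2 := Hinf_close (cd_ge0 e_loop S d0) (cd_sum e_loop S d0) (cd_low e_loop Hn S d0) j X.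
have a3 := Hg_diff e_loop Hn S (j * #|T|) X d0.
have b1 := ler_normlW a1; have b1' := lerNnormlW a1.
have b2 := ler_normlW a2; have b2' := lerNnormlW a2.
have b3 := ler_normlW a3; have b3' := lerNnormlW a3.
apply/ler_normlP; split; lra.
Qed.

Lemma fp_inf_eq (S : {set T}) :
  fp_inf R e S = nR^-1 * \sum_(x : T) Hinf e (@ci R T e S) [set x].
Proof.
rewrite /fp_inf; apply: cvg_lim; first exact: Rhausdorff.
apply/cvgrPdist_le => eps ep.
have b0 := bet_ge0 R Hn.
have b1 := bet_lt1 R Hn.
have [j Hj] := pow_small b0 b1 (divr_gt0 ep (ltr0n R 4)).
set t := (j * #|T|)%N.
pose M : R := 2 * (t%:R * (nR * nR)) / eps.
have M0 : 0 <= M by apply: divr_ge0; [apply: mulr_ge0; [lra | apply: mulr_ge0; [rewrite ler0n | apply: mulr_ge0; rewrite ler0n]] | lra].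
apply: filterS (nbhs_pinfty_ge (num_real M)) => delta Md.
have d0 : 0 <= delta by lra.
have hd : t%:R * (nR * (nR / (1 + delta))) <= eps / 2.
  have dp : 0 < 1 + delta by lra.
  rewrite mulrA mulrA ler_pdivrMr // -mulrA.
  move: Md; rewrite /M ler_pdivrMr // => H.
  have q : 0 <= t%:R * (nR * nR) by apply: mulr_ge0; rewrite ?ler0n // mulr_ge0 ?ler0n.
  rewrite mulrA in q; nra.
rewrite /fp -mulrBr normrM ger0_norm ?invr_ge0 ?ler0n //.
rewrite ler_pdivrMl ?nR_gt0 // -sumrB.
apply: le_trans (ler_norm_sum _ _ _) _.
apply: le_trans (_ : _ <= \sum_(x : T) eps) _; last first.
  by rewrite sumr_const -[_ *+ #|xpredT|]mulr_natl; exact: le_refl.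
apply: ler_sum => x _; rewrite fp_fromE.
exact: (@Hinf_ci_cd S eps delta j [set x] d0 Hj hd).
Qed.

End Conv.

End M3.
Import M3.

Module M4.
Set Implicit Arguments. Unset Strict Implicit. Unset Printing Implicit Defensive.
Import Order.TTheory GRing.Theory Num.Theory.
Import numFieldNormedType.Exports.
Local Open Scope classical_set_scope.
Local Open Scope ring_scope.

Lemma lim_pow (R : realType) (x a b C : R) : 0 <= x -> x < 1 -> 0 <= C ->
  (forall j, a <= b + C * x ^+ j) -> a <= b.
Proof.
move=> x0 x1 C0 H; rewrite leNgt; apply/negP => ab.
have ep : 0 < (a - b) / (2 * (C + 1)) by apply: divr_gt0; lra.
have [j Hj] := pow_small x0 x1 ep.
have := H j.
have C1 : 0 < C + 1 by lra.
have : C * x ^+ j <= (C + 1) * ((a - b) / (2 * (C + 1))).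
  apply: ler_pM => //; [exact: exprn_ge0 | lra].
have -> : (C + 1) * ((a - b) / (2 * (C + 1))) = (a - b) / 2.
  by field; rewrite gt_eqF.
lra.
Qed.

Section Cover.
Variables (R : realType) (T : finType) (e : rel T).
Hypothesis e_sym : symmetric e.
Hypothesis e_loop : forall u : T, e u u.
Hypothesis e_conn : forall x y : T, connect e x y.
Hypothesis Hn : (0 < #|T|)%N.

Local Notation nR := (#|T|%:R : R).
Local Notation fT := [set: T]%SET.
Local Notation f0 := (@finset.set0 T).
Local Notation gam := ((#|T|%:R : R)^-1 * (#|T|%:R : R)^-1).
Local Notation bet := (1 - gam ^+ #|T|).

Definition hitZ (Z S : {set T}) := [exists x, (x \in Z) && (x \in S)].
Definition Zu (X : {set T}) (u : T) : {set T} :=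
  if [exists x, e x u && (x \in X)] then [set u]%SET else f0.

Fixpoint Rg (S : {set T}) (t : nat) (X : {set T}) : R :=
  if hitZ X S then 1 else
  if t is t'.+1 then
    nR^-1 * \sum_(u : T) (if hitZ (Zu X u) S then 1 else
       (cnt R (fun x => e x u))^-1 * \sum_(v : T | e v u) Rg S t' (succ X u v))
  else 0.

Lemma hitZ_Zu X u S : hitZ (Zu X u) S = (u \in S) && [exists x, e x u && (x \in X)].
Proof.
rewrite /hitZ /Zu; case: ifP => ex; rewrite ?andbT ?andbF.
  apply/existsP/idP => [[x /andP [] ]|uS]; first by rewrite inE => /eqP ->.
  by exists u; rewrite inE eqxx.
by apply/existsP => [[x /andP []]]; rewrite finset.in_set0.
Qed.

Lemma Rg_hit S t X : hitZ X S -> Rg S t X = 1.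
Proof. by case: t => [|t] /= ->. Qed.

Lemma deg_gt0 u : 0 < cnt R (fun x => e x u).
Proof. exact: lt_le_trans ltr01 (@cnt_ge1 R T (fun x => e x u) u (e_loop u)). Qed.

Lemma Rg_bnd S t X : 0 <= Rg S t X <= 1.
Proof.
elim: t X => [|t IH] X /=; case: ifP => _; rewrite ?lexx ?ler01 //.
have Hu : forall u, 0 <= (if hitZ (Zu X u) S then 1 else
       (cnt R (fun x => e x u))^-1 * \sum_(v : T | e v u) Rg S t (succ X u v)) <= 1.
  move=> u; case: ifP => _; rewrite ?lexx ?ler01 //.
  have d0 := deg_gt0 u.
  apply/andP; split.
    apply: mulr_ge0; first by rewrite invr_ge0 ltW.
    by apply: sumr_ge0 => v _; case/andP: (IH (succ X u v)).
  rewrite -(mulVf (lt0r_neq0 d0)); apply: ler_wpM2l; first by rewrite invr_ge0 ltW.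
  rewrite /cnt; apply: ler_sum => v _; by case/andP: (IH (succ X u v)).
apply/andP; split.
  apply: mulr_ge0; rewrite ?invr_ge0 ?ler0n //.
  by apply: sumr_ge0 => u _; case/andP: (Hu u).
apply: le_trans (_ : _ <= nR^-1 * \sum_(u : T) 1) _.
  apply: ler_wpM2l; first by rewrite invr_ge0 ler0n.
  by apply: ler_sum => u _; case/andP: (Hu u).
by rewrite sumr_const (_ : #|xpredT| = #|T|) // mulVf // nR_neq0.
Qed.

Lemma Rg_ge0 S t X : 0 <= Rg S t X. Proof. by case/andP: (Rg_bnd S t X). Qed.
Lemma Rg_le1 S t X : Rg S t X <= 1. Proof. by case/andP: (Rg_bnd S t X). Qed.

Lemma Rg_step S t X : ~~ hitZ X S -> Rg S t.+1 X = stp e (ci R e S) (Rg S t) X.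
Proof.
move=> nh; rewrite /= (negbTE nh) /stp; congr (_ * _); apply: eq_bigr => u _.
rewrite hitZ_Zu /ci; case: ifP => [/andP [uS ex]|_].
  rewrite -(@ci_sum R T e e_loop S X u) /ci uS ex /=.
  apply: eq_bigr => v evu; case: ifP => vX; last by rewrite mul0r.
  by rewrite /succ vX Rg_hit ?mulr1 //; apply/existsP; exists u; rewrite setU11 uS.
by rewrite mulr_sumr.
Qed.

Definition MS (f : {set T} -> R) :=
  (forall A B : {set T}, A \subset B -> f A <= f B) /\
  (forall (A B : {set T}) a, A \subset B -> a \notin B ->
     f (a |: B) - f B <= f (a |: A) - f A).

Lemma MS_cst c : MS (fun _ => c).
Proof. by split => *; rewrite ?subrr. Qed.

Lemma MS_scale k f : 0 <= k -> MS f -> MS (fun S => k * f S).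
Proof.
move=> k0 [m s]; split => [A B AB|A B a AB aB]; first by rewrite ler_wpM2l // m.
by rewrite -!mulrBr ler_wpM2l // s.
Qed.

Lemma MS_sum (I : finType) (P : pred I) (F : I -> {set T} -> R) :
  (forall i, MS (F i)) -> MS (fun S => \sum_(i | P i) F i S).
Proof.
move=> H; split => [A B AB|A B a AB aB].
  by apply: ler_sum => i _; case: (H i) => m _; exact: m.
rewrite -!sumrB; apply: ler_sum => i _; case: (H i) => _ s; exact: s.
Qed.

Lemma hitZ_mono (Z A B : {set T}) : A \subset B -> hitZ Z A -> hitZ Z B.
Proof.
move=> /fintype.subsetP AB /existsP [x /andP [xZ xA]].
by apply/existsP; exists x; rewrite xZ AB.
Qed.

Lemma hitZ_U1 (Z : {set T}) a (A : {set T}) : hitZ Z (a |: A) = (a \in Z) || hitZ Z A.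
Proof.
apply/existsP/orP => [[x /andP [xZ]]|[aZ|/existsP [x /andP [xZ xA]]]].
- move=> /finset.setU1P [xa|xA]; first by left; rewrite -xa.
  by right; apply/existsP; exists x; rewrite xZ.
- by exists a; rewrite aZ setU11.
- by exists x; rewrite xZ inE xA orbT.
Qed.

Lemma MS_or Z (F : {set T} -> R) : MS F -> (forall S, F S <= 1) ->
  MS (fun S => if hitZ Z S then 1 else F S).
Proof.
move=> [m s] F1; split => [A B AB|A B a AB aB].
  case: (boolP (hitZ Z A)) => hA; first by rewrite (hitZ_mono AB hA).
  by case: ifP => _; [exact: F1 | exact: m].
rewrite !hitZ_U1.
case: (boolP (hitZ Z A)) => hA.
  by rewrite (hitZ_mono AB hA) !orbT subrr.
case: (boolP (hitZ Z B)) => hB.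
  rewrite orbT subrr; case: ifP => _; first by rewrite subr_ge0 F1.
  by rewrite subr_ge0 m //; apply/fintype.subsetP => x xA; rewrite inE xA orbT.
rewrite !orbF; case: ifP => _; first by rewrite lerD2l lerN2 m.
exact: s.
Qed.

Lemma Rg_MS t X : MS (fun S => Rg S t X).
Proof.
elim: t X => [|t IH] X.
  exact: (@MS_or X (fun _ => 0) (MS_cst 0) (fun _ => ler01)).
apply: (@MS_or X (fun S => nR^-1 * \sum_(u : T) (if hitZ (Zu X u) S then 1 else
       (cnt R (fun x => e x u))^-1 * \sum_(v : T | e v u) Rg S t (succ X u v)))).
  apply: MS_scale; first by rewrite invr_ge0 ler0n.
  apply: MS_sum => u.
  apply: (@MS_or (Zu X u) (fun S => (cnt R (fun x => e x u))^-1 * \sum_(v : T | e v u) Rg S t (succ X u v))).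
    apply: MS_scale; first by rewrite invr_ge0 ltW // deg_gt0.
    by apply: MS_sum => v; exact: IH.
  move=> S; have d0 := deg_gt0 u.
  rewrite -(mulVf (lt0r_neq0 d0)); apply: ler_wpM2l; first by rewrite invr_ge0 ltW.
  by rewrite /cnt; apply: ler_sum => v _; exact: Rg_le1.
move=> S.
have Hu : forall u, (if hitZ (Zu X u) S then 1 else
       (cnt R (fun x => e x u))^-1 * \sum_(v : T | e v u) Rg S t (succ X u v)) <= 1.
  move=> u; case: ifP => _ //; have d0 := deg_gt0 u.
  rewrite -(mulVf (lt0r_neq0 d0)); apply: ler_wpM2l; first by rewrite invr_ge0 ltW.
  by rewrite /cnt; apply: ler_sum => v _; exact: Rg_le1.
apply: le_trans (_ : _ <= nR^-1 * \sum_(u : T) 1) _.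
  apply: ler_wpM2l; first by rewrite invr_ge0 ler0n.
  by apply: ler_sum => u _; exact: Hu.
by rewrite sumr_const (_ : #|xpredT| = #|T|) // mulVf // nR_neq0.
Qed.

Lemma Rg_set0 t X : Rg f0 t X = 0.
Proof.
have h0 : forall Z, hitZ Z f0 = false.
  by move=> Z; apply/existsP => [[x /andP [_]]]; rewrite finset.in_set0.
elim: t X => [|t IH] X /=; rewrite h0 //.
rewrite big1 ?mulr0 // => u _; rewrite h0 big1 ?mulr0 // => v _; exact: IH.
Qed.

End Cover.

End M4.
Import M4.

Module M5.
Set Implicit Arguments. Unset Strict Implicit. Unset Printing Implicit Defensive.
Import Order.TTheory GRing.Theory Num.Theory.
Import numFieldNormedType.Exports.
Local Open Scope classical_set_scope.
Local Open Scope ring_scope.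

Section Sand.
Variables (R : realType) (T : finType) (e : rel T).
Hypothesis e_sym : symmetric e.
Hypothesis e_loop : forall u : T, e u u.
Hypothesis e_conn : forall x y : T, connect e x y.
Hypothesis Hn : (0 < #|T|)%N.
Variable S : {set T}.
Hypothesis HS : S != finset.set0.

Local Notation nR := (#|T|%:R : R).
Local Notation fT := [set: T]%SET.
Local Notation f0 := (@finset.set0 T).
Local Notation gam := ((#|T|%:R : R)^-1 * (#|T|%:R : R)^-1).
Local Notation bet := (1 - gam ^+ #|T|).
Local Notation c := (@ci R T e S).
Local Notation RG := (@Rg R T e S).

Let c0 := @ci_ge0 R T e S.
Let c1 := @ci_sum R T e e_loop S.
Let c2 := @ci_low R T e e_loop S.

Lemma hitT : hitZ fT S.
Proof. by case/set0Pn: HS => s sS; apply/existsP; exists s; rewrite finset.in_setT sS. Qed.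

Lemma Hg_le_Rg t X : Hg e c t X <= RG t X.
Proof.
elim: t X => [|t IH] X.
  have [->|XT] := eqVneq X fT; first by rewrite Hg_T Rg_hit // hitT.
  by rewrite /= (negbTE XT); case: ifP => _; rewrite ?ler01.
have [->|XT] := eqVneq X fT; first by rewrite Hg_T Rg_hit // hitT.
case: (boolP (hitZ X S)) => hX; first by rewrite Rg_hit // (Hg_le1 Hn c0 c1).
rewrite (@Rg_step R T e e_loop S) // /= (negbTE XT).
exact: (stp_le _ c0).
Qed.

Lemma succ_hit X u v : hitZ X S -> e v u -> c X u v != 0 -> hitZ (succ X u v) S.
Proof.
move=> /existsP [s /andP [sX sS]] evu nz; rewrite /succ.
case: ifP => vX.
  by apply/existsP; exists s; rewrite sS inE sX orbT.
have [su|su] := eqVneq s u.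
  move: nz; rewrite /ci; subst s.
  have -> : (u \in S) && [exists x, e x u && (x \in X)].
    by rewrite sS /=; apply/existsP; exists u; rewrite e_loop sX.
  by rewrite vX eqxx.
by apply/existsP; exists s; rewrite sS !inE su sX.
Qed.

Lemma HN_one t X : hitZ X S -> Hg e c t X + Ng e c t X = 1.
Proof.
elim: t X => [|t IH] X hX.
  have [->|XT] := eqVneq X fT; first by rewrite Hg_T Ng_T addr0.
  have X0 : X != f0.
    by apply: contraTneq hX => ->; apply/existsP => [[x /andP [] ]]; rewrite finset.in_set0.
  by rewrite /= (negbTE XT) (negbTE X0) add0r.
have [->|XT] := eqVneq X fT; first by rewrite Hg_T Ng_T addr0.
have X0 : X != f0.
  by apply: contraTneq hX => ->; apply/existsP => [[x /andP [] ]]; rewrite finset.in_set0.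
rewrite /= (negbTE XT) (negbTE X0) /= -stp_add.
rewrite -[RHS](stp_cst Hn c1 1 X); apply: stp_ext => u v evu nz.
by apply: IH; apply: succ_hit.
Qed.

Lemma Hinf_le1 X : Hinf e c X <= 1.
Proof. exact: le_trans (Hinf_le Hn c0 c1 0 X) (HN_le1 Hn c0 c1 0 X). Qed.

Lemma Hinf_one X : hitZ X S -> Hinf e c X = 1.
Proof.
move=> hX; apply/eqP; rewrite eq_le Hinf_le1 /=.
apply: (@lim_pow R bet _ _ 1 (bet_ge0 R Hn) (bet_lt1 R Hn) ler01) => j.
have h1 := Hinf_ge Hn c0 c1 (j * #|T|) X.
have h2 := Ng_pow e_sym e_conn Hn c0 c1 c2 j X.
have h3 := HN_one (j * #|T|) hX.
lra.
Qed.

Lemma Hinf_super X : X != fT -> stp e c (Hinf e c) X <= Hinf e c X.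
Proof.
move=> XT; have [->|X0] := eqVneq X f0; first by rewrite (stp_set0 Hn c1).
apply: (@lim_pow R bet _ _ 1 (bet_ge0 R Hn) (bet_lt1 R Hn) ler01) => j.
set t := (j * #|T|)%N.
have h1 : stp e c (Hinf e c) X <= stp e c (fun Y => Hg e c t Y + Ng e c t Y) X.
  by apply: (stp_le _ c0) => Y; exact: (Hinf_le Hn c0 c1).
rewrite stp_add in h1.
have h2 : stp e c (Hg e c t) X = Hg e c t.+1 X by rewrite /= (negbTE XT).
have h3 : stp e c (Ng e c t) X = Ng e c t.+1 X by rewrite /= (negbTE XT) (negbTE X0).
have h4 := Hinf_ge Hn c0 c1 t.+1 X.
have h5 := Ng_anti1 Hn c0 c1 t X.
have h6 := Ng_pow e_sym e_conn Hn c0 c1 c2 j X.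
rewrite -/t in h6.
lra.
Qed.

Lemma Rg_le_Hinf t X : RG t X <= Hinf e c X.
Proof.
elim: t X => [|t IH] X.
  case: (boolP (hitZ X S)) => hX; first by rewrite Rg_hit // Hinf_one.
  rewrite /= (negbTE hX); exact: le_trans (Hg_ge0 Hn c0 c1 0 X) (Hinf_ge Hn c0 c1 0 X).
case: (boolP (hitZ X S)) => hX; first by rewrite Rg_hit // Hinf_one.
have XT : X != fT by apply: contraNneq hX => ->; exact: hitT.
rewrite (@Rg_step R T e e_loop S) //; apply: le_trans (Hinf_super XT).
exact: (stp_le _ c0).
Qed.

Lemma sandwich j X :
  RG (j * #|T|) X <= Hinf e c X <= RG (j * #|T|) X + bet ^+ j.
Proof.
apply/andP; split; first exact: Rg_le_Hinf.
have h1 := Hinf_le Hn c0 c1 (j * #|T|) X.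
have h2 := Ng_pow e_sym e_conn Hn c0 c1 c2 j X.
have h3 := Hg_le_Rg (j * #|T|) X.
lra.
Qed.

End Sand.

End M5.
Import M5.

Module M6.
Set Implicit Arguments. Unset Strict Implicit. Unset Printing Implicit Defensive.
Import Order.TTheory GRing.Theory Num.Theory.
Import numFieldNormedType.Exports.
Local Open Scope classical_set_scope.
Local Open Scope ring_scope.

Section Greedy.
Variables (R : realType) (T : finType).
Local Notation f0 := (@finset.set0 T).

Lemma MS_chain (g : {set T} -> R) : MS g -> forall (A : {set T}) (s : seq T),
  g (A :|: [set x in s]) <= g A + \sum_(o <- s) (g (o |: A) - g A).
Proof.
move=> [m sm] A; elim => [|o s IH].
  rewrite big_nil addr0 (_ : A :|: [set x in [::]] = A) ?lexx //.
  by apply/setP => x; rewrite !inE orbF.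
have -> : A :|: [set x in o :: s] = o |: (A :|: [set x in s]).
  by apply/setP => x; rewrite !inE orbCA.
rewrite big_cons.
set C := A :|: [set x in s].
have AC : A \subset C by apply/fintype.subsetP => x xA; rewrite finset.in_setU xA.
suff : g (o |: C) - g C <= g (o |: A) - g A by lra.
case: (boolP (o \in C)) => oC; last exact: sm.
have -> : o |: C = C.
  by apply/setP => x; rewrite finset.in_setU1; apply/idP/idP => [/orP [/eqP ->|]|->] //; rewrite orbT.
rewrite subrr subr_ge0; apply: m; apply/fintype.subsetP => x xA; by rewrite finset.in_setU1 xA orbT.
Qed.

Lemma greedy (g : {set T} -> R) (MSg : MS g) (g0 : g f0 = 0)
  (k : nat) (kp : (0 < k)%N) (O : {set T}) (Ok : #|O| = k)
  (s : nat -> {set T}) (w : nat -> T) (eps : R) (ep : 0 <= eps)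
  (s0 : s 0%N = f0) (sS : forall i, (i < k)%N -> s i.+1 = w i |: s i)
  (gr : forall i, (i < k)%N -> forall x, x \notin s i -> g (x |: s i) <= g (w i |: s i) + eps) :
  (1 - (1 - k%:R^-1) ^+ k) * g O - k%:R * eps <= g (s k).
Proof.
have [m sm] := MSg.
have kR : 0 < (k%:R : R) by rewrite ltr0n.
set q := 1 - k%:R^-1.
have ki : k%:R^-1 * k%:R = 1 :> R by rewrite mulVf // gt_eqF.
have ki0 : 0 <= (k%:R : R)^-1 by rewrite invr_ge0 ltW.
have q0 : 0 <= q by rewrite /q subr_ge0 invf_le1 // ler1n.
have q1 : q <= 1 by rewrite /q lerBlDr lerDl.
have step : forall i, (i < k)%N -> g O <= g (s i) + k%:R * (g (s i.+1) - g (s i) + eps).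
  move=> i ik.
  apply: le_trans (_ : g O <= g (s i :|: O)) _.
    by apply: m; apply/fintype.subsetP => x xO; rewrite finset.in_setU xO orbT.
  rewrite -{1}(set_enum O); apply: le_trans (MS_chain MSg _ _) _.
  rewrite lerD2l big_enum /=.
  apply: le_trans (_ : _ <= \sum_(o in O) (g (s i.+1) - g (s i) + eps)) _; last first.
    by rewrite sumr_const Ok mulr_natl.
  apply: ler_sum => o _.
  case: (boolP (o \in s i)) => oi.
    have -> : o |: s i = s i.
      by apply/setP => x; rewrite finset.in_setU1; apply/idP/idP => [/orP [/eqP ->|]|->] //; rewrite orbT.
    rewrite subrr; have : g (s i) <= g (s i.+1).
      by apply: m; rewrite sS //; apply/fintype.subsetP => x xA; rewrite finset.in_setU1 xA orbT.
    lra.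
  have := gr i ik o oi; rewrite -sS //; lra.
have main : forall i, (i <= k)%N -> g O - g (s i) <= q ^+ i * g O + i%:R * eps.
  elim => [|i IH] ik; first by rewrite s0 g0 subr0 expr0 mul1r mul0r addr0.
  have ik' : (i < k)%N by [].
  have IH' := IH (ltnW ik).
  have st := step i ik'.
  have st' : k%:R^-1 * (g O - g (s i)) <= k%:R^-1 * (k%:R * (g (s i.+1) - g (s i) + eps)).
    by apply: ler_wpM2l => //; lra.
  rewrite mulrA ki mul1r in st'.
  have qe : q * (g O - g (s i)) <= q * (q ^+ i * g O + i%:R * eps).
    by apply: ler_wpM2l.
  have ie : 0 <= i%:R * eps by rewrite mulr_ge0 ?ler0n.
  have qie : q * (i%:R * eps) <= i%:R * eps.
    by rewrite -[X in _ <= X]mul1r; apply: ler_wpM2r.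
  rewrite exprS -mulrA -natr1 mulrDl mul1r.
  rewrite /q in qe qie |- *.
  move: qe; rewrite mulrDr; lra.
have := main k (leqnn k); lra.
Qed.

Lemma q_exp (k : nat) : (0 < k)%N -> (1 - k%:R^-1) ^+ k <= (expR (1 : R))^-1.
Proof.
move=> kp.
have kR : 0 < (k%:R : R) by rewrite ltr0n.
have q0 : 0 <= 1 - (k%:R : R)^-1 by rewrite subr_ge0 invf_le1 // ler1n.
have h1 : 1 - (k%:R : R)^-1 <= expR (- k%:R^-1).
  by have := expR_ge1Dx (- (k%:R : R)^-1).
apply: le_trans (_ : _ <= (expR (- k%:R^-1)) ^+ k) _.
  by apply: lerXn2r; rewrite ?nnegrE // ltW // expR_gt0.
by rewrite -expRM_natl mulrN mulfV ?gt_eqF // expRN.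
Qed.

End Greedy.

End M6.
Import M6.

Import Order.TTheory GRing.Theory Num.Theory.
Local Open Scope ring_scope.

Theorem theorem4 (R : realType) (T : finType) (e : rel T)
  (e_sym : symmetric e)
  (e_loop : forall u : T, e u u)
  (e_conn : forall x y : T, connect e x y)
  (k : nat) (k_pos : (0 < k)%N) (k_le : (k <= #|T|)%N)
  (Sstar : {set T})
  (Sstar_card : #|Sstar| = k)
  (Sstar_max : forall S : {set T}, #|S| = k -> fp_inf R e S <= fp_inf R e Sstar)
  (v : 'I_k -> T)
  (v_greedy : forall i : 'I_k,
     let P := [set v j | j : 'I_k & (j < i)%N] in
     v i \notin P /\
     (forall x : T, x \notin P -> fp_inf R e (x |: P) <= fp_inf R e (v i |: P))) :
  fp_inf R e [set v j | j : 'I_k] >= (1 - (expR (1 : R))^-1) * fp_inf R e Sstar.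
Proof.
have Hn : (0 < #|T|)%N := leq_trans k_pos k_le.
have b0 := bet_ge0 R Hn.
have b1 := bet_lt1 R Hn.
set bet := 1 - _ in b0 b1.
pose gt (j : nat) (S : {set T}) : R :=
  (#|T|%:R)^-1 * \sum_(x : T) Rg R e S (j * #|T|) [set x].
have nI0 : 0 <= (#|T|%:R : R)^-1 by rewrite invr_ge0 ler0n.
have sand : forall j (S : {set T}), S != finset.set0 ->
    gt j S <= fp_inf R e S /\ fp_inf R e S <= gt j S + bet ^+ j.
  move=> j S HS; rewrite (fp_inf_eq R e_sym e_loop e_conn Hn S).
  have H := fun x => sandwich R e_sym e_loop e_conn Hn HS j [set x].
  split.
    rewrite /gt; apply: ler_wpM2l => //; apply: ler_sum => x _.
    by case/andP: (H x).
  apply: le_trans (_ : _ <= (#|T|%:R)^-1 *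
      \sum_(x : T) (Rg R e S (j * #|T|) [set x] + bet ^+ j)) _.
    by apply: ler_wpM2l => //; apply: ler_sum => x _; case/andP: (H x).
  rewrite big_split /= mulrDr sumr_const (_ : #|xpredT| = #|T|) //.
  rewrite -[bet ^+ j *+ _]mulr_natl mulrA mulVf ?mul1r; [exact: le_refl | exact: nR_neq0].
have gMS : forall j, MS (gt j).
  move=> j; apply: MS_scale => //; apply: MS_sum => x; exact: Rg_MS.
have g0 : forall j, gt j finset.set0 = 0.
  by move=> j; rewrite /gt big1 ?mulr0 // => x _; rewrite Rg_set0.
have gge0 : forall j S, 0 <= gt j S.
  move=> j S; apply: mulr_ge0 => //; apply: sumr_ge0 => x _; exact: Rg_ge0.
move: k_pos k_le Sstar_card Sstar_max v v_greedy.
case: k => [//|k] k_pos k_le Scard Smax v vg.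
pose s (i : nat) : {set T} := [set v j | j : 'I_k.+1 & (j < i)%N].
pose w (i : nat) : T := v (inord i).
have s0 : s 0%N = finset.set0.
  by apply/setP => y; rewrite inE; apply/imsetP => [[j]]; rewrite inE ltn0.
have sS : forall i, (i < k.+1)%N -> s i.+1 = w i |: s i.
  move=> i ik; apply/setP => y; rewrite finset.in_setU1.
  apply/imsetP/idP => [[j]|].
    rewrite inE ltnS leq_eqVlt => /orP [/eqP ji|ji] ->.
      have -> : j = inord i by apply: val_inj; rewrite /= inordK.
      by rewrite eqxx.
    by apply/orP; right; apply/imsetP; exists j; rewrite // inE.
  case/orP => [/eqP ->|/imsetP [j]].
    by exists (inord i); rewrite // inE inordK.
  by rewrite inE => ji ->; exists j; rewrite // inE ltnS ltnW.
have sk : s k.+1 = [set v j | j : 'I_k.+1].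
  apply/setP => y; apply/imsetP/imsetP => [[j _ ->]|[j _ ->]]; exists j => //.
  by rewrite inE ltn_ord.
have ne1 : forall (x : T) (P : {set T}), x |: P != finset.set0.
  by move=> x P; apply/finset.set0Pn; exists x; rewrite finset.setU11.
have gr : forall j i, (i < k.+1)%N -> forall x, x \notin s i ->
    gt j (x |: s i) <= gt j (w i |: s i) + bet ^+ j.
  move=> j i ik x xs.
  have := vg (inord i); rewrite /= inordK // => -[_ G].
  have := G x xs; rewrite -/(s i) -/(w i) => G'.
  have [h1 _] := sand j _ (ne1 x (s i)).
  have [_ h2] := sand j _ (ne1 (w i) (s i)).
  lra.
have Sne : Sstar != finset.set0 by rewrite -card_gt0 Scard.
have skne : s k.+1 != finset.set0.
  by rewrite sS // ne1.
have e0 : 0 < expR (1 : R) by exact: expR_gt0.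
have e1 : (expR (1 : R))^-1 <= 1.
  by rewrite invf_le1 //; have := expR_ge1Dx (1:R); lra.
have e2 : 0 <= (expR (1 : R))^-1 by rewrite invr_ge0 ltW.
apply: (@lim_pow R bet _ _ (k.+2)%:R b0 b1 (ler0n _ _)) => j.
have G := greedy (gMS j) (g0 j) k_pos Scard (exprn_ge0 j b0) s0 sS (gr j).
have Q := q_exp R k_pos.
have [hO1 hO2] := sand j _ Sne.
have [hs1 hs2] := sand j _ skne.
rewrite sk in hs1 G.
have gO := gge0 j Sstar.
have m1 : (1 - (expR (1:R))^-1) * gt j Sstar <= (1 - (1 - k.+1%:R^-1) ^+ k.+1) * gt j Sstar.
  by apply: ler_wpM2r => //; lra.
have m2 : (1 - (expR (1:R))^-1) * fp_inf R e Sstar <= (1 - (expR (1:R))^-1) * (gt j Sstar + bet ^+ j).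
  by apply: ler_wpM2l => //; lra.
have bj : 0 <= bet ^+ j by exact: exprn_ge0.
have m3 : (1 - (expR (1:R))^-1) * bet ^+ j <= bet ^+ j.
  by rewrite -[X in _ <= X]mul1r; apply: ler_wpM2r => //; lra.
rewrite mulrDr in m2.
have kk : (k.+2%:R : R) = k.+1%:R + 1 by rewrite -natr1.
rewrite kk mulrDl mul1r.
lra.
Qed.
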